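(* Let $G$ be a mixed abelian group in which every subgroup is an essential subgroup of some direct summand of $G$. Then the torsion subgroup of $G$ is divisible.
   Context: All groups are additively written abelian groups; a mixed group contains both non-zero elements of finite order and elements of infinite order. A subgroup $H$ of a group $A$ is essential in $A$ if $H \cap S \neq \{0\}$ for every non-zero subgroup $S$ of $A$. *)

(* Defs.v *)
(* abelian groups are zmodType's; subgroups are predicates. *)
From mathcomp Require Import all_boot all_algebra.
Set Implicit Arguments. Unset Strict Implicit. Unset Printing Implicit Defensive.
Import GRing.Theory.
Local Open Scope ring_scope.

Definition is_subgroup (G : zmodType) (H : G -> Prop) : Prop :=
  H 0 /\ (forall x y, H x -> H y -> H (x - y)).

Definition subgroup_le (G : zmodType) (H K : G -> Prop) : Prop :=
  forall x, H x -> K x.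

Definition direct_summand (G : zmodType) (D : G -> Prop) : Prop :=
  is_subgroup D /\
  exists K : G -> Prop, is_subgroup K /\
    (forall x, D x -> K x -> x = 0) /\
    (forall g, exists d k, D d /\ K k /\ g = d + k).

Definition essential_in (G : zmodType) (H D : G -> Prop) : Prop :=
  is_subgroup H /\ subgroup_le H D /\
  forall S : G -> Prop, is_subgroup S -> subgroup_le S D ->
    (exists x, S x /\ x <> 0) -> exists x, H x /\ S x /\ x <> 0.

Definition finite_order (G : zmodType) (x : G) : Prop :=
  exists n : nat, (0 < n)%N /\ x *+ n = 0.

Arguments finite_order : clear implicits.
Definition torsion_part (G : zmodType) : G -> Prop := fun x => finite_order G x.

Definition mixed (G : zmodType) : Prop :=
  (exists x : G, x <> 0 /\ finite_order G x) /\ (exists x : G, ~ finite_order G x).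

Definition divisible_subgroup (G : zmodType) (A : G -> Prop) : Prop :=
  forall (x : G) (n : nat), A x -> (0 < n)%N -> exists y, A y /\ y *+ n = x.
Arguments torsion_part : clear implicits.

(* Main.v *)
Require Import Defs.
From mathcomp Require Import all_boot all_algebra.
Import GRing.Theory.
Local Open Scope ring_scope.

Set Implicit Arguments. Unset Strict Implicit.
Section Aux.
Variable G : zmodType.
Variable H : G -> Prop.
Hypothesis sH : is_subgroup H.

Lemma sg0 : H 0. Proof. by case: sH. Qed.
Lemma sgN x : H x -> H (- x).
Proof. move=> hx; have := (proj2 sH) 0 x sg0 hx; by rewrite sub0r. Qed.
Lemma sgD x y : H x -> H y -> H (x + y).
Proof. move=> hx hy; have := (proj2 sH) x (- y) hx (sgN hy); by rewrite opprK. Qed.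
Lemma sgB x y : H x -> H y -> H (x - y).
Proof. exact: (proj2 sH). Qed.
Lemma sgMn x n : H x -> H (x *+ n).
Proof. move=> hx; elim: n => [|n IH]; first by rewrite mulr0n; apply: sg0.
by rewrite mulrS; apply: sgD. Qed.
End Aux.

Lemma inf_order_int (G : zmodType) (a : G) (N : nat) (j : int) :
  ~ finite_order G a -> (0 < N)%N -> (a *+ N) *~ j = 0 -> j = 0.
Proof.
move=> Ha HN; case: j => [q|q] /=.
- case: q => [|q] // h; exfalso; apply: Ha; exists (N * q.+1)%N; split.
    by rewrite muln_gt0 HN.
  by rewrite mulrnA.
- move=> h; exfalso; apply: Ha; exists (N * q.+1)%N; split.
    by rewrite muln_gt0 HN.
  rewrite mulrnA; move: h; rewrite NegzE mulrNz => /eqP; rewrite oppr_eq0 => /eqP.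
  by rewrite -pmulrn.
Qed.

Theorem lemma2p15 (G : zmodType) :
  mixed G ->
  (forall H : G -> Prop, is_subgroup H ->
     exists D : G -> Prop, direct_summand D /\ essential_in H D) ->
  divisible_subgroup (torsion_part G).
Proof.
move=> [_ [a Ha]] HG x n [m [Hm Hxm]] Hn.
pose b := a *+ n + x.
pose H := fun z : G => exists j : int, z = b *~ j.
have sH : is_subgroup H.
  split; first by exists 0; rewrite mulr0z.
  by move=> _ _ [i ->] [j ->]; exists (i - j); rewrite mulrzBr.
have [D [[sD [K [sK [DK DKs]]]] [_ [HD Hess]]]] := HG H sH.
have Db : D b by apply: HD; exists 1; rewrite mulr1z.
have [d [k [Dd [Kk ak]]]] := DKs a.
have [d' [k' [Dd' [Kk' xk]]]] := DKs x.
have d'0 : d' = 0.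
  apply/eqP; apply/negPn/negP => /eqP nz.
  pose S := fun z : G => D z /\ z *+ m = 0.
  have sS : is_subgroup S.
    split; first by split; [exact: sg0 | rewrite mul0rn].
    move=> u v [Du hu] [Dv hv]; split; first exact: sgB.
    by rewrite mulrnBl hu hv subr0.
  have Sd' : S d'.
    split=> //; apply: DK; first exact: sgMn.
    have -> : d' *+ m = - (k' *+ m) by apply/eqP; rewrite -subr_eq0 opprK -mulrnDl -xk Hxm.
    by apply: sgN => //; apply: sgMn.
  have [z [[j ->] [[_ hz] znz]]] := Hess S sS (fun u h => proj1 h) (ex_intro _ d' (conj Sd' nz)).
  apply: znz.
  have hb : b *+ (m * m) = a *+ (n * (m * m)).
    by rewrite /b mulrnDl (mulrnA x m m) Hxm mul0rn addr0 -mulrnA.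
  have : (a *+ (n * (m * m))) *~ j = 0.
    by rewrite -hb !pmulrn mulrzAC -pmulrn mulrnA hz mul0rn.
  by move/(inf_order_int Ha); rewrite !muln_gt0 Hn Hm => /(_ isT) ->; rewrite mulr0z.
move: xk; rewrite d'0 add0r => xk.
have hK : K (k *+ n + x) by rewrite xk; apply: sgD => //; apply: sgMn.
have hD : D (k *+ n + x).
  have -> : k *+ n + x = b - d *+ n.
    rewrite /b ak mulrnDl; apply/eqP; rewrite eq_sym subr_eq; apply/eqP.
    by rewrite [in RHS]addrC addrA.
  by apply: sgB => //; apply: sgMn.
have e := DK _ hD hK.
exists (- k); split; last first.
  by rewrite mulNrn; apply/eqP; rewrite eq_sym -subr_eq0 opprK addrC e.
exists (n * m)%N; split; first by rewrite muln_gt0 Hn Hm.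
have e2 : k *+ n = - x by apply/eqP; rewrite -subr_eq0 opprK e.
by rewrite mulNrn mulrnA e2 mulNrn Hxm !oppr0.
Qed.
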